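(* Let $D_{m,n}:=(K+1)(m+n)$ and, for a constant $B>0$ and $\epsilon>0$, define the sieve $$\mathcal{H}_{m,n}(\epsilon):=\big\{\vartheta\in\mathcal{H}_{m,n}:\ e^{-B\epsilon^2/\bar\lambda_{m,n}}\le z_\ell\le e^{B\epsilon^2/\bar\lambda_{m,n}}\ \text{for all coordinates } \ell=1,\dots,D_{m,n}\big\}.$$ There exist constants $A,B,C_s>0$ such that whenever $\epsilon^2\ge A K(m\vee n)\bar\lambda_{m,n}L_{m,n}$, $$\Pi_{\mathrm{fac}}\big(\mathcal{H}_{m,n}(\epsilon)^c\big)\le\exp\big(-C_s\,\epsilon^2/\bar\lambda_{m,n}\big).$$
   Context: $n,m,K$ positive integers; $\bar\lambda_{m,n}\in(0,1/2]$; $L_{m,n}:=\log(m+n)+\log(1/\bar\lambda_{m,n})$. Factor space $\mathcal{H}_{m,n}:=\mathbb{R}_+^n\times\mathbb{R}_+^m\times\mathbb{R}_+^{n\times K}\times\mathbb{R}_+^{m\times K}$, with elements $\vartheta=(\alpha,\rho,\Theta,B)$ whose $D_{m,n}=(K+1)(m+n)$ scalar coordinates are denoted $z_\ell$. The prior $\Pi_{\mathrm{fac}}$ makes all coordinates independent with Gamma distributions: $\alpha_i\sim\Gamma(a_\alpha,b_\alpha)$, $\rho_j\sim\Gamma(a_\rho,b_\rho)$, $\Theta_{ik}\sim\Gamma(a_\theta,b_\theta)$, $B_{jk}\sim\Gamma(a_\beta,b_\beta)$ with fixed positive shape and rate hyperparameters. *)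

(* Defs.v *)
From HB Require Import structures.
From mathcomp Require Import all_boot all_order all_algebra.
From mathcomp Require Import all_classical all_reals all_analysis.

Set Implicit Arguments.
Unset Strict Implicit.
Unset Printing Implicit Defensive.

Import Order.TTheory GRing.Theory Num.Theory.
Import numFieldNormedType.Exports.

Local Open Scope classical_set_scope.
Local Open Scope ring_scope.

Definition Gamma_fn (R : realType) (a : R) : R :=
  fine (\int[@lebesgue_measure R]_(t in (`]0%R, +oo[%classic : set R))
          ((t `^ (a - 1)) * expR (- t))%:E)%E.

Definition gamma_pdf (R : realType) (a b : R) (x : R) : R :=
  if 0 < x then b `^ a / Gamma_fn a * x `^ (a - 1) * expR (- (b * x)) else 0.

Definition has_gamma_law d (T : measurableType d) (R : realType)
  (P : probability T R) (X : {RV P >-> R}) (a b : R) : Prop :=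
  forall A : set R, measurable A ->
    distribution P X A = (\int[@lebesgue_measure R]_(x in A) (gamma_pdf a b x)%:E)%E.

Definition mutually_independent d (T : measurableType d) (R : realType)
  (P : probability T R) (I : finType) (X : I -> {RV P >-> R}) : Prop :=
  forall B : I -> set R, (forall i, measurable (B i)) ->
    P (\bigcap_(i in [set: I]) (X i @^-1` B i)) =
    (\big[*%E/1%E]_(i : I) P (X i @^-1` B i))%E.

(* Coordinates of the factor space H_{m,n} = R_+^n x R_+^m x R_+^{n x K} x R_+^{m x K}:
   alpha_i, rho_j, Theta_{ik}, B_{jk}.  There are (K+1)(m+n) of them. *)
Definition fac_coord (n m K : nat) : finType :=
  ('I_n + 'I_m + ('I_n * 'I_K) + ('I_m * 'I_K))%type.

Record hyper (R : realType) := Hyper {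
  a_alpha : R; b_alpha : R; a_rho : R; b_rho : R;
  a_theta : R; b_theta : R; a_beta : R; b_beta : R }.

Definition hyper_pos (R : realType) (h : hyper R) : Prop :=
  0 < a_alpha h /\ 0 < b_alpha h /\ 0 < a_rho h /\ 0 < b_rho h /\
  0 < a_theta h /\ 0 < b_theta h /\ 0 < a_beta h /\ 0 < b_beta h.

Definition coord_shape (R : realType) (h : hyper R) n m K (c : fac_coord n m K) : R :=
  match c with
  | inl (inl (inl _)) => a_alpha h
  | inl (inl (inr _)) => a_rho h
  | inl (inr _) => a_theta h
  | inr _ => a_beta h
  end.

Definition coord_rate (R : realType) (h : hyper R) n m K (c : fac_coord n m K) : R :=
  match c with
  | inl (inl (inl _)) => b_alpha h
  | inl (inl (inr _)) => b_rho h
  | inl (inr _) => b_theta h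
  | inr _ => b_beta h
  end.

Definition prior_fac d (T : measurableType d) (R : realType) (P : probability T R)
  (h : hyper R) n m K (z : fac_coord n m K -> {RV P >-> R}) : Prop :=
  mutually_independent z /\
  forall c, has_gamma_law (z c) (coord_shape h c) (coord_rate h c).

Definition Lmn (R : realType) (m n : nat) (lam : R) : R :=
  ln ((m + n)%:R) + ln (lam^-1).

Definition sieve (R : realType) n m K (B lam eps : R) : set (fac_coord n m K -> R) :=
  [set th | forall c, expR (- (B * eps ^+ 2 / lam)) <= th c <= expR (B * eps ^+ 2 / lam)].

(* Main.v *)
Require Import Defs.
From HB Require Import structures.
From mathcomp Require Import all_boot all_order all_algebra.
From mathcomp Require Import all_classical all_reals all_analysis.
From mathcomp Require Import measurable_realfun.
From mathcomp Require Import ring lra zify.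
Set Implicit Arguments.
Unset Strict Implicit.
Unset Printing Implicit Defensive.
Import Order.TTheory GRing.Theory Num.Theory.
Import numFieldNormedType.Exports.
Local Open Scope classical_set_scope.
Local Open Scope ring_scope.
Section S.
Variable R : realType.
Notation mu := (@lebesgue_measure R).

Lemma powR_cont (p x : R) : 0 < x -> {for x, continuous (fun y : R => y `^ p)}.
Proof.
move=> x0; apply/differentiable_continuous; rewrite -derivable1_diffP.
by apply: derivable_powR; rewrite in_itv/= andbT.
Qed.

Lemma ftc_pow (p K al be : R) : p != 0 -> 0 < al -> al < be ->
  (\int[mu]_(x in `[al, be]) (K * x `^ (p - 1))%:E =
   ((K / p) * (be `^ p) - (K / p) * (al `^ p))%:E)%E.
Proof.
move=> p0 al0 albe.
have F'E : forall x : R, 0 < x -> is_derive x 1 (fun y : R => K / p * y `^ p) (K * x `^ (p - 1)).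
  move=> x x0.
  have H := is_derive1_powR p x0.
  have H2 := @is_deriveZ _ _ _ (fun y : R => y `^ p) (K / p) x 1 _ H.
  have -> : K * x `^ (p - 1) = (K / p) *: (p * x `^ (p - 1)).
    by rewrite /GRing.scale /= mulrA mulfVK.
  exact: H2.
rewrite EFinB (continuous_FTC2 (F := fun y : R => K / p * y `^ p)) //.
- apply: continuous_in_subspaceT => x; rewrite inE /= in_itv /= => /andP[alx _].
  apply: (@continuousM _ R^o (fun=> K) (fun y : R => y `^ (p - 1))); first exact: cst_continuous.
  by apply: powR_cont; apply: lt_le_trans alx.
- split.
  + move=> x; rewrite in_itv /= => /andP[alx _].
    by have [] := F'E x (lt_trans al0 alx).
  + apply: cvg_at_right_filter; apply: (@continuousM _ R^o (fun=> K / p) (fun y : R => y `^ p)); first exact: cst_continuous.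
    exact: powR_cont.
  + apply: cvg_at_left_filter; apply: (@continuousM _ R^o (fun=> K / p) (fun y : R => y `^ p)); first exact: cst_continuous.
    exact: powR_cont (lt_trans al0 albe).
- move=> x; rewrite in_itv /= => /andP[alx _].
  by rewrite derive1E; have [_ ->] := F'E x (lt_trans al0 alx).
Qed.
Local Open Scope ereal_scope.
Lemma mu_bigcup_le d (T : measurableType d) (nu : {measure set T -> \bar R})
  (F : (set T)^nat) (C : \bar R) :
  (forall i, measurable (F i)) -> nondecreasing_seq F ->
  (forall n, nu (F n) <= C) -> nu (\bigcup_n F n) <= C.
Proof.
move=> mF ndF FC.
have h := @nondecreasing_cvg_mu _ _ _ nu _ mF (bigcup_measurable (fun k _ => mF k)) ndF.
rewrite -(cvg_lim _ h) //.
apply: lime_le; first by apply/cvg_ex; eexists; exact: h.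
by apply: nearW => n; exact: FC.
Qed.

Lemma union_bound d (T : measurableType d) (nu : {measure set T -> \bar R})
  (I : Type) (s : seq I) (S : I -> set T) :
  (forall i, measurable (S i)) ->
  nu (\big[setU/set0]_(i <- s) S i) <= \sum_(i <- s) nu (S i).
Proof.
move=> mS; elim: s => [|i s IH]; first by rewrite !big_nil measure0.
rewrite !big_cons; apply: le_trans (measureU2 _ _ _) _ => //.
  exact: bigsetU_measurable.
by apply: leeD.
Qed.
Local Close Scope ereal_scope.

Section gamma.
Variables (a b : R).
Hypotheses (a0 : 0 < a) (b0 : 0 < b).

Definition c0 := b `^ a / Gamma_fn a.

Lemma Gamma_ge0 : 0 <= Gamma_fn a.
Proof.
rewrite /Gamma_fn; apply: fine_ge0; apply: integral_ge0 => x _.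
by rewrite lee_fin mulr_ge0 ?powR_ge0 ?expR_ge0.
Qed.

Lemma c0_ge0 : 0 <= c0.
Proof. by rewrite /c0 divr_ge0 ?powR_ge0 ?Gamma_ge0. Qed.

Lemma pdf_ge0 x : 0 <= gamma_pdf a b x.
Proof.
rewrite /gamma_pdf; case: ifP => // _.
by rewrite mulr_ge0 ?expR_ge0 // mulr_ge0 ?powR_ge0 // c0_ge0.
Qed.

Lemma measurable_pdf : measurable_fun [set: R] (fun x : R => (gamma_pdf a b x)%:E).
Proof.
apply/measurable_EFinP; rewrite /gamma_pdf.
apply: measurable_fun_ifT.
- by apply: measurable_fun_ltr => //; exact: measurable_cst.
- apply: measurable_funM; first apply: measurable_funM.
  + exact: measurable_cst.
  + exact: measurable_powR.
  + change (measurable_fun setT (expR \o (fun x : R => - (b * x)))).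
    apply: measurableT_comp; first exact: measurable_expR.
    change (measurable_fun setT (-%R \o (fun x : R => b * x))).
    apply: measurableT_comp => //.
    change (measurable_fun setT ((fun=> b) \* (@id R))).
    exact: measurable_funM.
- exact: measurable_cst.
Qed.

Lemma pdf_le_lo x : 0 < x -> gamma_pdf a b x <= c0 * x `^ (a - 1).
Proof.
move=> x0; rewrite /gamma_pdf x0 -/c0.
rewrite -[leRHS]mulr1 ler_wpM2l //; first by rewrite mulr_ge0 ?powR_ge0 ?c0_ge0.
by rewrite expR_le1 oppr_le0 mulr_ge0 // ltW.
Qed.

Definition Nn := Num.truncn (a + 1).
Definition Mc := c0 * (Nn.+1)`!%:R / b ^+ Nn.+1.

Lemma pdf_le_hi x : 1 <= x -> gamma_pdf a b x <= Mc * x `^ (-1 - 1).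
Proof.
move=> x1; have x0 : 0 < x by apply: lt_le_trans x1.
have e1 : x `^ (a - 1) = x `^ (a + 1) * x `^ (-1 - 1).
  rewrite -powRD; first by congr (_ `^ _); lra.
  by apply/implyP => _; rewrite gt_eqF.
set N := Nn.+1.
set F : R := N`!%:R.
set B : R := b ^+ N.
have hB : 0 < B by rewrite exprn_gt0.
have hF : 0 < F by rewrite ltr0n fact_gt0.
have h1 : x `^ (a + 1) <= x ^+ N.
  rewrite -powR_mulrn ?(ltW x0) //; apply: ler_powR => //.
  by apply: ltW; apply: truncnS_gt.
have h2 : B * x ^+ N / F <= expR (b * x).
  have hbx : 0 <= b * x by rewrite mulr_ge0 // ltW.
  apply: le_trans (expR_ge1Dxn Nn hbx).
  by rewrite /B /F -exprMn lerDr.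
have h3 : x ^+ N <= F / B * expR (b * x).
  have -> : x ^+ N = F / B * (B * x ^+ N / F).
    by field; apply/andP; split; rewrite gt_eqF.
  by apply: ler_wpM2l; [rewrite divr_ge0 // ltW | exact: h2].
have key : x `^ (a + 1) * expR (- (b * x)) <= F / B.
  apply: le_trans (ler_wpM2r (expR_ge0 _) (le_trans h1 h3)) _.
  by rewrite -!mulrA -expRD subrr expR0 mulr1.
rewrite (_ : gamma_pdf a b x = c0 * (x `^ (a + 1) * expR (- (b * x))) * x `^ (-1 - 1)); last first.
  by rewrite /gamma_pdf x0 e1 /c0; ring.
rewrite (_ : Mc = c0 * (F / B)); last by rewrite /Mc mulrA.
by apply: ler_wpM2r; [exact: powR_ge0 | apply: ler_wpM2l; [exact: c0_ge0 | exact: key]].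
Qed.
End gamma.
Lemma mpow (D : set R) (K p : R) : measurable_fun D (fun x : R => (K * x `^ p)%:E).
Proof.
apply/measurable_EFinP; apply: measurable_funTS.
change (measurable_fun setT ((fun=> K) \* (fun x : R => x `^ p))).
apply: measurable_funM; [exact: measurable_cst | exact: measurable_powR].
Qed.



Section tails.
Variables (a b : R).
Hypotheses (a0 : 0 < a) (b0 : 0 < b).
Variables (d : measure_display) (T : measurableType d) (P : probability T R)
  (X : {RV P >-> R}).
Hypothesis HX : has_gamma_law X a b.

Local Open Scope ereal_scope.

Lemma int_bound (al be K p : R) : (p != 0)%R -> (0 < al)%R -> (al < be)%R ->
  (forall x, (al <= x)%R -> (x <= be)%R -> (gamma_pdf a b x <= K * x `^ (p - 1))%R) ->
  distribution P X `[al, be] <= ((K / p) * (be `^ p) - (K / p) * (al `^ p))%:E.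
Proof.
move=> p0 al0 albe hle.
rewrite HX //= -ftc_pow //.
apply: ge0_le_integral => //.
- by move=> x _; rewrite lee_fin pdf_ge0.
- exact: measurable_funTS (measurable_pdf a b).
- exact: mpow.
- by move=> x; rewrite /= in_itv /= => /andP[h1 h2]; rewrite lee_fin hle.
Qed.

Lemma lo_tail (u : R) : (0 < u)%R ->
  distribution P X `]0%R, u] <= (c0 a b / a * u `^ a)%:E.
Proof.
move=> u0.
pose F := fun n : nat => `[(u / n.+2%:R)%R, u]%classic.
have sub : `]0%R, u]%classic `<=` \bigcup_n F n.
  move=> x /=; rewrite in_itv /= => /andP[x0 xu].
  exists (Num.truncn (u / x)) => //=; rewrite /F /= in_itv /= xu andbT.
  have h := truncnS_gt (u / x).
  rewrite ler_pdivrMr ?ltr0n //.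
  rewrite ltr_pdivrMr // in h.
  apply: ltW; apply: (lt_le_trans h); rewrite mulrC ler_wpM2l ?(ltW x0) //.
  by rewrite ler_nat.
apply: (le_trans (le_measure _ _ _ sub)); rewrite ?inE.
- exact: measurable_itv.
- by apply: bigcup_measurable => k _; exact: measurable_itv.
apply: mu_bigcup_le.
- by move=> k; exact: measurable_itv.
- move=> m n mn; apply/subsetPset => x; rewrite /F /= !in_itv /= => /andP[h1 ->]; rewrite andbT.
  apply: le_trans h1; rewrite ler_pM2l // lef_pV2 ?posrE ?ltr0n // ler_nat.
  by rewrite ltnS ltnS.
- move=> n; rewrite /F.
  have al0 : (0 < u / n.+2%:R)%R by rewrite divr_gt0 // ltr0n.
  apply: (le_trans (@int_bound (u / n.+2%:R) u (c0 a b) a (negbT (gt_eqF a0)) al0 _ _)).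
  + by rewrite ltr_pdivrMr ?ltr0n // ltr_pMr // ltr1n.
  + by move=> x alx _; apply: pdf_le_lo => //; apply: lt_le_trans alx.
  + rewrite lee_fin lerBlDr lerDl mulr_ge0 ?powR_ge0 //.
    by rewrite divr_ge0 ?(ltW a0) // c0_ge0.
Qed.
Lemma Mc_ge0 : (0 <= Mc a b)%R.
Proof.
rewrite /Mc; apply: divr_ge0; [apply: mulr_ge0; [exact: c0_ge0 | by []] | by rewrite exprn_ge0 // ltW].
Qed.

Lemma hi_tail (y : R) : (1 <= y)%R ->
  distribution P X `[y, +oo[ <= (Mc a b * y `^ (-1))%:E.
Proof.
move=> y1; have y0 : (0 < y)%R by apply: lt_le_trans y1.
pose F := fun n : nat => `[y, (y + n.+1%:R)%R]%classic.
have sub : `[y, +oo[%classic `<=` \bigcup_n F n.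
  move=> x /=; rewrite in_itv /= andbT => yx.
  exists (Num.truncn (x - y)) => //=; rewrite /F /= in_itv /= yx /=.
  have h := truncnS_gt (x - y).
  by apply: ltW; rewrite -ltrBlDl.
apply: (le_trans (le_measure _ _ _ sub)); rewrite ?inE.
- exact: measurable_itv.
- by apply: bigcup_measurable => k _; exact: measurable_itv.
apply: mu_bigcup_le.
- by move=> k; exact: measurable_itv.
- move=> m n mn; apply/subsetPset => x; rewrite /F /= !in_itv /= => /andP[-> h1] /=.
  by apply: le_trans h1 _; rewrite lerD2l ler_nat ltnS.
- move=> n; rewrite /F.
  have hne : ((-1 : R) != 0)%R by rewrite oppr_eq0 oner_eq0.
  apply: (le_trans (@int_bound y (y + n.+1%:R) (Mc a b) (-1) hne y0 _ _)).
  + by rewrite ltrDl ltr0n.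
  + by move=> x yx _; apply: pdf_le_hi => //; apply: le_trans yx.
  + rewrite lee_fin !invrN1 !mulrN1 !mulNr opprK addrC lerBlDr lerDl.
    by rewrite mulr_ge0 ?powR_ge0 ?Mc_ge0.
Qed.

Lemma neg_zero : distribution P X `]-oo, 0%R] = 0.
Proof.
rewrite HX //=; apply: integral0_eq => x /=; rewrite in_itv /= => x0.
by rewrite /gamma_pdf ltNge x0.
Qed.
Lemma coord_bound (t : R) : (0 <= t)%R ->
  distribution P X (~` `[expR (- t), expR t]%classic) <=
  ((c0 a b / a) * expR (- (a * t)) + Mc a b * expR (- t))%:E.
Proof.
move=> t0.
have u0 : (0 < expR (- t))%R by exact: expR_gt0.
have y1 : (1 <= expR t)%R by apply: le_trans (expR_ge1Dx t); rewrite lerDl.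
have sub : ~` `[expR (- t), expR t]%classic `<=`
    (`]-oo, 0%R]%classic `|` `]0%R, expR (- t)]%classic) `|` `[expR t, +oo[%classic.
  move=> x /=; rewrite in_itv /= => /negP; rewrite negb_and -!ltNge => hx.
  case: (leP x 0%R) => x0.
    by left; left; rewrite /= in_itv /= x0.
  case/orP: hx => hx.
    by left; right; rewrite /= in_itv /= x0 ltW.
  by right; rewrite /= in_itv /= ltW.
apply: (le_trans (le_measure _ _ _ sub)); rewrite ?inE.
  - by apply: measurableC; exact: measurable_itv.
- by apply/measurableU; [apply/measurableU|]; exact: measurable_itv.
apply: (le_trans (measureU2 _ _ _)).
- by apply/measurableU; exact: measurable_itv.
- exact: measurable_itv.
rewrite EFinD; apply: leeD.
- apply: (le_trans (measureU2 _ _ _)); try exact: measurable_itv.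
  change (distribution P X `]-oo, 0%R] + distribution P X `]0%R, expR (- t)] <= (c0 a b / a * expR (- (a * t)))%:E).
  rewrite neg_zero add0r; apply: (le_trans (lo_tail u0)).
  by rewrite -expRM (mulrC (- t)%R) mulrN.
- change (distribution P X `[expR t, +oo[ <= (Mc a b * expR (- t))%:E).
  apply: (le_trans (hi_tail y1)).
  by rewrite -expRM mulrN1.
Qed.
End tails.
Lemma in_bigsetU d (T : measurableType d) (I : eqType) (s : seq I) (S : I -> set T) i w :
  i \in s -> S i w -> (\big[setU/set0]_(j <- s) S j) w.
Proof.
elim: s => [//|j s IH]; rewrite inE big_cons => /orP[/eqP <-|js] Siw.
  by left.
by right; apply: IH.
Qed.

Definition Cblk (a b : R) := c0 a b / a + Mc a b.

Lemma Cblk_ge0 a b : 0 < a -> 0 < b -> 0 <= Cblk a b.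
Proof.
move=> a0 b0; rewrite /Cblk addr_ge0 ?Mc_ge0 //.
by rewrite divr_ge0 ?c0_ge0 // ltW.
Qed.

Definition C1 (h : hyper R) :=
  Cblk (a_alpha h) (b_alpha h) + Cblk (a_rho h) (b_rho h) +
  Cblk (a_theta h) (b_theta h) + Cblk (a_beta h) (b_beta h).

Definition kap (h : hyper R) :=
  (1 + (a_alpha h)^-1 + (a_rho h)^-1 + (a_theta h)^-1 + (a_beta h)^-1)^-1.

Section hyp.
Variable h : hyper R.
Hypothesis hpos : hyper_pos h.

Lemma C1_ge0 : 0 <= C1 h.
Proof.
case: hpos => [p1 [p2 [p3 [p4 [p5 [p6 [p7 p8]]]]]]].
have q1 := Cblk_ge0 p1 p2; have q2 := Cblk_ge0 p3 p4.
have q3 := Cblk_ge0 p5 p6; have q4 := Cblk_ge0 p7 p8.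
rewrite /C1; lra.
Qed.

Lemma coord_C n m K (c : fac_coord n m K) :
  Cblk (coord_shape h c) (coord_rate h c) <= C1 h.
Proof.
case: hpos => [p1 [p2 [p3 [p4 [p5 [p6 [p7 p8]]]]]]].
have q1 := Cblk_ge0 p1 p2; have q2 := Cblk_ge0 p3 p4.
have q3 := Cblk_ge0 p5 p6; have q4 := Cblk_ge0 p7 p8.
rewrite /C1; case: c => [[[i|i]|i]|i] /=; lra.
Qed.

Lemma coord_pos n m K (c : fac_coord n m K) :
  0 < coord_shape h c /\ 0 < coord_rate h c.
Proof.
case: hpos => [p1 [p2 [p3 [p4 [p5 [p6 [p7 p8]]]]]]].
by case: c => [[[i|i]|i]|i].
Qed.

Lemma kap_facts : 0 < kap h /\ kap h <= 1 /\
  forall n m K (c : fac_coord n m K), kap h <= coord_shape h c.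
Proof.
case: hpos => [p1 [p2 [p3 [p4 [p5 [p6 [p7 p8]]]]]]].
have i1 : 0 < (a_alpha h)^-1 by rewrite invr_gt0.
have i3 : 0 < (a_rho h)^-1 by rewrite invr_gt0.
have i5 : 0 < (a_theta h)^-1 by rewrite invr_gt0.
have i7 : 0 < (a_beta h)^-1 by rewrite invr_gt0.
set S := (1 + (a_alpha h)^-1 + (a_rho h)^-1 + (a_theta h)^-1 + (a_beta h)^-1).
have S0 : 0 < S by rewrite /S; lra.
have key : forall x, 0 < x -> x^-1 <= S -> S^-1 <= x.
  move=> x x0 hx; rewrite -[x]invrK lef_pV2 ?posrE ?invr_gt0 //.
split; first by rewrite /kap invr_gt0.
split.
  by rewrite /kap -[1 in leRHS]invr1 lef_pV2 ?posrE // /S; lra.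
move=> n m K c; rewrite /kap -/S.
case: c => [[[i|i]|i]|i] /=; apply: key => //; rewrite /S; lra.
Qed.
End hyp.
End S.

Lemma per_coord (R : realType) (h : hyper R) (hpos : hyper_pos h) n m K
  d (T : measurableType d) (P : probability T R) (z : fac_coord n m K -> {RV P >-> R})
  (hz : forall c, has_gamma_law (z c) (coord_shape h c) (coord_rate h c)) c (t : R) :
  0 <= t ->
  (P (z c @^-1` (~` `[expR (- t), expR t]%classic)) <= (C1 h * expR (- (kap h * t)))%:E)%E.
Proof.
move=> t0.
have [a0 b0] := coord_pos hpos c.
have [k0 [k1 ka]] := kap_facts hpos.
have := coord_bound a0 b0 (hz c) t0.
move=> H; apply: (le_trans H); rewrite lee_fin.
set a := coord_shape h c; set b := coord_rate h c.
have e1 : expR (- (a * t)) <= expR (- (kap h * t)).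
  by rewrite ler_expR lerN2 ler_wpM2r // ka.
have e2 : expR (- t) <= expR (- (kap h * t)).
  by rewrite ler_expR lerN2 -[leRHS]mul1r ler_wpM2r.
have hC := coord_C hpos c.
have g1 : 0 <= c0 a b / a by rewrite divr_ge0 ?c0_ge0 // ltW.
have g2 : 0 <= Mc a b by exact: Mc_ge0.
have g3 : 0 <= expR (- (kap h * t)) by exact: expR_ge0.
rewrite /Cblk -/a -/b in hC.
apply: (le_trans (lerD (ler_wpM2l g1 e1) (ler_wpM2l g2 e2))).
rewrite -mulrDl; apply: ler_wpM2r => //.
Qed.

Theorem propositionL5 (R : realType) (h : hyper R) (hpos : hyper_pos h) :
  exists A B Cs : R, [/\ 0 < A, 0 < B, 0 < Cs &
    forall (n m K : nat), (0 < n)%N -> (0 < m)%N -> (0 < K)%N ->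
    forall lam : R, 0 < lam -> lam <= 2^-1 ->
    forall (d : measure_display) (T : measurableType d) (P : probability T R)
      (z : fac_coord n m K -> {RV P >-> R}),
      prior_fac h z ->
    forall eps : R, 0 < eps ->
      A * K%:R * (maxn m n)%:R * lam * Lmn m n lam <= eps ^+ 2 ->
      (P (~` [set w | (fun c => z c w) \in @sieve R n m K B lam eps])
        <= (expR (- (Cs * eps ^+ 2 / lam)))%:E)%E].
Proof.
have [k0 [k1 ka]] := kap_facts hpos.
have C0 := C1_ge0 hpos.
have l2 : 0 < ln (2 : R) by rewrite ln_gt0 // ltr1n.
exists ((4 + C1 h) / ln 2), (3 / kap h), 1; split.
- by rewrite divr_gt0 //; lra.
- by rewrite divr_gt0.
- by [].
move=> n m K n0 m0 K0 lam lam0 lam2 d T P z [_ hz] eps eps0 hA.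
set s := eps ^+ 2 / lam.
set t := 3 / kap h * eps ^+ 2 / lam.
have s0 : 0 <= s by rewrite /s divr_ge0 ?sqr_ge0 // ltW.
have kt : kap h * t = 3 * s.
  by rewrite /t /s; field; apply/andP; split; rewrite gt_eqF.
have t0 : 0 <= t.
  have : 0 <= kap h * t by rewrite kt; lra.
  by rewrite pmulr_rge0.
have eqS : ~` [set w | (fun c => z c w) \in @sieve R n m K (3 / kap h) lam eps] =
    \big[setU/set0]_(c <- enum (fac_coord n m K))
       (z c @^-1` (~` `[expR (- t), expR t]%classic)).
  rewrite -bigcup_seq; apply/seteqP; split => w /=.
  - move=> hw.
    have [c hc] : exists c, ~ (expR (- t) <= z c w <= expR t).
      apply/existsNP => H; apply: hw; rewrite in_setE /sieve /=; exact: H.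
    exists c; first by rewrite /= mem_enum.
    by move=> hh; apply: hc; move: hh; rewrite /= in_itv /=.
  - move=> [c _] /=; rewrite in_itv /= => hc hw; apply/negP: hc.
    by move: hw; rewrite in_setE /sieve /= => /(_ c).
rewrite eqS.
apply: (le_trans (union_bound _ _ _)).
  by move=> c; apply: measurable_funPTI; apply: measurableC; exact: measurable_itv.
apply: (le_trans (lee_sum _ _)).
  by move=> c _; exact: (per_coord hpos hz c t0).
rewrite sumEFin lee_fin big_enum /= sumr_const kt mul1r -/s.
rewrite /fac_coord !card_sum !card_prod !card_ord.
set D := (n + m + n * K + m * K)%N.
set KM : R := K%:R * (maxn m n)%:R.
have KM1 : 1 <= KM.
  by rewrite /KM -natrM ler1n muln_gt0 K0 /= leq_max m0.
have DKM : D%:R <= 4 * KM.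
  rewrite /KM -!natrM ler_nat /D; nia.
have L2 : ln 2 <= Lmn m n lam.
  rewrite /Lmn; apply: (le_trans (y := 0 + ln 2)); first by rewrite add0r.
  apply: lerD.
    by apply: ln_ge0; rewrite ler1n addn_gt0 n0 orbT.
  rewrite ler_ln ?posrE ?invr_gt0 //.
  by rewrite -[2 in leLHS]invrK lef_pV2 ?posrE ?invr_gt0.
have hs : (4 + C1 h) * KM <= s.
  rewrite /s ler_pdivlMr //.
  apply: le_trans hA.
  have e : (4 + C1 h) / ln 2 * K%:R * (maxn m n)%:R * lam * Lmn m n lam =
     ((4 + C1 h) * KM * lam) * (Lmn m n lam / ln 2).
    by rewrite /KM; field; rewrite gt_eqF.
  rewrite e -[leLHS]mulr1; apply: ler_wpM2l.
    by rewrite !mulr_ge0 // ?ltW //; lra.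
  by rewrite ler_pdivlMr // mul1r.
have Ds : D%:R <= s by nra.
have Cs : C1 h <= s by nra.
have es : s <= expR s by apply: le_trans (expR_ge1Dx s); lra.
have D0 : 0 <= D%:R :> R by [].
have -> : expR (- s) = expR s * expR s * expR (- (3 * s)).
  by rewrite -!expRD; congr expR; lra.
set E := expR (- (3 * s)).
rewrite -mulr_natr (_ : C1 h * E * D%:R = (D%:R * C1 h) * E); last by ring.
apply: ler_wpM2r; first exact: expR_ge0.
by apply: ler_pM => //; apply: le_trans es.
Qed.
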